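(* Let $\mathbf{x}\in\mathbb{R}^p$ be a random vector with a joint density, and let $\Pi\in\{1,\dots,K\}$ be a random missingness-pattern label, with $\Pi=1$ meaning the case is complete (all coordinates observed) and $\Pi=k$ meaning the coordinates in $\mathbf{mis}(k)$ are missing and those in $\mathbf{obs}(k)$ are observed. Let $\mathbf{obs}=\bigcap_{k=1}^K\mathbf{obs}(k)\neq\varnothing$ and $\mathbf{mis}=\bigcup_{k=1}^K\mathbf{mis}(k)$, and assume the MAR condition: $\mathbf{x}_{\mathbf{mis}}$ is conditionally independent of $\Pi$ given $\mathbf{x}_{\mathbf{obs}}$. Let $P$ denote the distribution of $\mathbf{x}$ given $\Pi=1$ (the complete-case distribution), with density $\phi(\cdot\mid \Pi=1)$. Fix $k\in\{2,\dots,K\}$ and let $G_k$ be a generator which, given an input $\mathbf{x}$, an independent noise $\mathbf{z}\sim\mathcal{N}(0,\mathbf{I}_p)$ and the mask $\mathbf{m}_k$, outputs $\widehat{\mathbf{x}}=\mathbf{x}\odot\mathbf{m}_k+\widehat{G}_k(\mathbf{x}\odot\mathbf{m}_k+\mathbf{z}\odot(1-\mathbf{m}_k))\odot(1-\mathbf{m}_k)$, so that the imputed part $\widehat{\mathbf{x}}_{\mathbf{mis}(k)}$ has a conditional density $p_{\theta_k}(\cdot\mid\mathbf{x}_{\mathbf{obs}(k)})$ depending only on $\mathbf{x}_{\mathbf{obs}(k)}$. Let $P_k$ be the distribution of $\widehat{\mathbf{x}}$ when $\mathbf{x}\sim P$. Suppose $(G_2,D_2,\dots,G_K,D_K)$ is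 an optimal solution of the minimax problem $$\min_{G_2,\dots,G_K}\max_{D_2,\dots,D_K}\sum_{k=2}^K\Big(\mathbb{E}_{\widehat{\mathbf{x}}\sim P_k}[D_k(\widehat{\mathbf{x}})]-\mathbb{E}_{\mathbf{x}\sim P}[D_k(\mathbf{x})]\Big)$$ over 1-Lipschitz discriminators $D_k:\mathbb{R}^p\to\mathbb{R}$, in the sense that the optimal value is $0$, i.e. the Wasserstein-1 distance between $P$ and $P_k$ is zero, so $P_k=P$. Then for (almost) every $t_1$ in the support of the complete-case distribution of $\mathbf{x}_{\mathbf{obs}(k)}$ and every $t_2$, $$p_{\theta_k}(\widehat{\mathbf{x}}_{\mathbf{mis}(k)}=t_2\mid \mathbf{x}_{\mathbf{obs}(k)}=t_1)=f(\mathbf{x}_{\mathbf{mis}(k)}=t_2\mid\mathbf{x}_{\mathbf{obs}(k)}=t_1),$$ i.e. $G_k$ learns the true conditional distribution of the missing variables of pattern $k$ given its observed variables.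
   Context: Data consist of $p$ variables; cases are grouped into $K$ missingness patterns. For pattern $k$, $\mathbf{obs}(k)\subseteq\{1,\dots,p\}$ is the index set of observed variables and $\mathbf{mis}(k)$ its complement; pattern $1$ has $\mathbf{obs}(1)=\{1,\dots,p\}$. The mask vector $\mathbf{m}_k\in\{0,1\}^p$ has $\mathbf{m}_k(j)=1$ iff $j\in\mathbf{obs}(k)$; $\odot$ is elementwise multiplication; $\widehat{G}_k:\mathbb{R}^p\to\mathbb{R}^p$ is the generator network. For an index set $S$, $\mathbf{x}_S$ is the subvector of $\mathbf{x}$ on $S$. $f(\mathbf{x}_{\mathbf{mis}(k)}\mid\mathbf{x}_{\mathbf{obs}(k)})$ denotes the true conditional density of $\mathbf{x}_{\mathbf{mis}(k)}$ given $\mathbf{x}_{\mathbf{obs}(k)}$ in the full (not pattern-conditioned) data distribution. *)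

(* Defs.v *)
(* R^p is modelled as [p.-tuple R], which mathcomp-analysis equips with the
   product (coordinate-generated) sigma-algebra.  Lebesgue integration over
   R^S (S a set of coordinates) is the iterated one-dimensional Lebesgue
   integral over the coordinates in S (Tonelli), the other coordinates being
   held fixed. *)
From HB Require Import structures.
From mathcomp Require Import all_boot all_order all_algebra.
From mathcomp Require Import all_classical all_reals.
From mathcomp Require Import topology normedtype sequences measure lebesgue_measure
  lebesgue_integral probability normal_distribution numfun.

Set Implicit Arguments.
Unset Strict Implicit.
Unset Printing Implicit Defensive.
Import Order.TTheory GRing.Theory Num.Theory.
Local Open Scope classical_set_scope.
Local Open Scope ring_scope.

Section Defs.
Variables (R : realType) (p : nat).

Definition setc (t : p.-tuple R) (j : 'I_p) (y : R) : p.-tuple R :=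
  [tuple if i == j then y else tnth t i | i < p].

Fixpoint iint (s : seq 'I_p) (h : p.-tuple R -> \bar R) (t : p.-tuple R)
    : \bar R :=
  match s with
  | [::] => h t
  | j :: s' => (\int[@lebesgue_measure R]_(y in setT) iint s' h (setc t j y))%E
  end.

Definition zerov : p.-tuple R := [tuple 0 | _ < p].

Definition leb_int (h : p.-tuple R -> \bar R) : \bar R :=
  iint (enum 'I_p) h zerov.

(* marginal density: integrate the coordinates in S out of the density f;
   the result depends only on the coordinates outside S *)
Definition marg (S : {set 'I_p}) (f : p.-tuple R -> R) (t : p.-tuple R)
    : \bar R :=
  iint (enum S) (fun v => (f v)%:E) t.

Definition cond_dens (S : {set 'I_p}) (f : p.-tuple R -> R) (t : p.-tuple R)
    : R :=
  f t / fine (marg S f t).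

Definition ae_leb (P : p.-tuple R -> Prop) : Prop :=
  exists N : set (p.-tuple R), measurable N /\
    leb_int (fun v => (\1_N v)%:E) = 0%E /\ ~` [set t | P t] `<=` N.

Definition is_density (f : p.-tuple R -> R) : Prop :=
  measurable_fun setT f /\ (forall t, 0 <= f t).

Definition std_gauss (z : p.-tuple R) : R :=
  \prod_(i < p) normal_pdf 0 1 (tnth z i).

Definition mask (O : {set 'I_p}) (i : 'I_p) : R := (i \in O)%:R.

Definition gen_out (Ghat : p.-tuple R -> p.-tuple R) (O : {set 'I_p})
    (x z : p.-tuple R) : p.-tuple R :=
  let inp := [tuple tnth x i * mask O i + tnth z i * (1 - mask O i) | i < p] in
  [tuple tnth x i * mask O i + tnth (Ghat inp) i * (1 - mask O i) | i < p].

End Defs.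

(* Main.v *)
Require Import Defs.
From HB Require Import structures.
From mathcomp Require Import all_boot all_order all_algebra.
From mathcomp Require Import all_classical all_reals.
From mathcomp Require Import topology normedtype sequences measure lebesgue_measure
  lebesgue_integral probability normal_distribution numfun.
From mathcomp Require Import measurable_realfun.
From mathcomp.algebra_tactics Require Import ring lra.
Import Order.TTheory GRing.Theory Num.Theory.
Local Open Scope classical_set_scope.
Local Open Scope ring_scope.

Section Iint.
Context {R : realType} {p : nat}.
Local Notation T := (p.-tuple R).
Local Notation mu := (@lebesgue_measure R).
Implicit Types (h : T -> \bar R) (s : seq 'I_p) (t : T).

Lemma tnth_setc t j y i : tnth (setc t j y) i = if i == j then y else tnth t i.
Proof. by rewrite /setc tnth_mktuple. Qed.

Lemma setcC t i j x y : i != j -> setc (setc t i x) j y = setc (setc t j y) i x.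
Proof.
move=> ij; apply: eq_from_tnth => l; rewrite !tnth_setc.
case: (eqVneq l j) => [lj|]; case: (eqVneq l i) => [li|] //.
by move: ij; rewrite -lj -li eqxx.
Qed.

Lemma measurable_setc j : measurable_fun setT (fun ty : T * R => setc ty.1 j ty.2).
Proof.
apply/measurable_fun_tnthP => i.
rewrite (_ : _ \o _ = fun ty : T * R => if i == j then ty.2 else tnth ty.1 i);
  last by apply/funext => ty; rewrite /= tnth_setc.
case: eqP => _; first exact: measurable_snd.
exact: measurableT_comp (measurable_tnth i) measurable_fst.
Qed.

Lemma measurable_setc1 t j : measurable_fun setT (setc t j).
Proof.
have -> : setc t j = (fun ty : T * R => setc ty.1 j ty.2) \o (fun y => (t, y)) by [].
apply: measurableT_comp; first exact: measurable_setc.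
exact: pair1_measurable.
Qed.

Lemma iint_ge0 s h : (forall v, (0 <= h v)%E) -> forall t, (0 <= iint s h t)%E.
Proof.
elim: s h => [|j s IH] h h0 t //=.
by apply: integral_ge0 => y _; exact: IH.
Qed.

Lemma measurable_iint s h : measurable_fun [set: T] h -> (forall v, (0 <= h v)%E) ->
  measurable_fun [set: T] (iint s h).
Proof.
elim: s h => [|j s IH] h mh h0 //=.
set F := fun ty : T * R => iint s h (setc ty.1 j ty.2).
have mF : measurable_fun setT F := measurableT_comp (IH h mh h0) (measurable_setc j).
have := measurable_fun_fubini_tonelli_F (m2 := mu) F mF (fun x => iint_ge0 _ _ h0 _).
by [].
Qed.


Lemma iint_agree s h t t' : (forall i, i \notin s -> tnth t i = tnth t' i) ->
  iint s h t = iint s h t'.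
Proof.
elim: s t t' => [|j s IH] t t' /= H.
  by congr h; apply: eq_from_tnth => i; exact: H.
apply: eq_integral => y _; apply: IH => i Hi; rewrite !tnth_setc.
case: eqP => // /eqP ij; apply: H; by rewrite inE negb_or ij.
Qed.

Lemma iint_cat s1 s2 h : iint (s1 ++ s2) h = iint s1 (iint s2 h).
Proof. by elim: s1 => //= j s1 IH; apply/funext => t; rewrite IH. Qed.

Lemma iint_cons j s s' h : iint s h = iint s' h -> iint (j :: s) h = iint (j :: s') h.
Proof. by move=> e; apply/funext => t /=; rewrite e. Qed.

Lemma measurable_setc2 t i j :
  measurable_fun setT (fun xy : R * R => setc (setc t i xy.1) j xy.2).
Proof.
apply/measurable_fun_tnthP => l.
rewrite (_ : _ \o _ = fun xy : R * R =>
   if l == j then xy.2 else if l == i then xy.1 else tnth t l);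
  last by apply/funext => xy; rewrite /= !tnth_setc.
case: eqP => _; first exact: measurable_snd.
case: eqP => _; first exact: measurable_fst.
exact: measurable_cst.
Qed.

Lemma iint_swap i j s h : i != j -> measurable_fun [set: T] h ->
  (forall v, (0 <= h v)%E) -> iint (i :: j :: s) h = iint (j :: i :: s) h.
Proof.
move=> ij mh h0; apply/funext => t /=.
set f := fun xy : R * R => iint s h (setc (setc t i xy.1) j xy.2).
have mf : measurable_fun setT f.
  by apply: measurableT_comp; [exact: measurable_iint | exact: measurable_setc2].
have := fubini_tonelli (m1 := mu) (m2 := mu) f mf (fun x => iint_ge0 _ _ h0 _).
rewrite /f /= => ->.
by apply: eq_integral => y _; apply: eq_integral => x _; rewrite setcC.
Qed.

Lemma iint_front a j b h : measurable_fun [set: T] h -> (forall v, (0 <= h v)%E) ->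
  j \notin a -> iint (a ++ j :: b) h = iint (j :: a ++ b) h.
Proof.
move=> mh h0; elim: a => [|x a IH] //.
rewrite inE negb_or => /andP[jx ja].
by rewrite !cat_cons (iint_cons x _ _ _ (IH ja)) iint_swap // eq_sym.

Qed.

Lemma iint_perm s1 s2 h : measurable_fun [set: T] h -> (forall v, (0 <= h v)%E) ->
  uniq s1 -> perm_eq s1 s2 -> iint s1 h = iint s2 h.
Proof.
move=> mh h0; elim: s1 s2 => [|j s1 IH] s2.
  by move=> _ /perm_size; case: s2.
move=> u12 pe.
have js2 : j \in s2 by rewrite -(perm_mem pe) mem_head.
have us2 : uniq s2 by rewrite -(perm_uniq pe).
case/splitPr: js2 us2 pe => p1 p2 us2 pe.
have jp1 : j \notin p1.
  by move: us2; rewrite cat_uniq /= => /and3P[_ /norP[] + _ _].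
rewrite iint_front //; apply: iint_cons; apply: IH.
  by case/andP: u12.
have : perm_eq (j :: s1) (j :: p1 ++ p2).
  apply: perm_trans pe _.
  by have := perm_catCA p1 [:: j] p2; rewrite /= => /permPl ->.
by rewrite perm_cons.
Qed.

Lemma leb_int_split (S : {set 'I_p}) h : measurable_fun [set: T] h ->
  (forall v, (0 <= h v)%E) ->
  leb_int h = iint (enum (~: S)%SET) (iint (enum S) h) (zerov R p).
Proof.
move=> mh h0; rewrite /leb_int -iint_cat; apply: (congr1 (fun f => f (zerov R p))).
apply: iint_perm => //; first exact: enum_uniq.
apply: uniq_perm; first exact: enum_uniq.
  rewrite cat_uniq !enum_uniq /= andbT; apply/hasPn => x /=.
  by rewrite !mem_enum inE => ->.
by move=> x /=; rewrite mem_cat !mem_enum !inE; case: (x \in S).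
Qed.


Definition agree_out s t t' := forall i, i \notin s -> tnth t i = tnth t' i.

Lemma measurable_iint_setc s h t j : measurable_fun [set: T] h ->
  (forall v, (0 <= h v)%E) ->
  measurable_fun [set: R] (fun y => iint s h (setc t j y)).
Proof.
by move=> mh h0; apply: measurableT_comp; [exact: measurable_iint|exact: measurable_setc1].
Qed.

Lemma iintZ_out s h (a : T -> \bar R) : measurable_fun [set: T] h ->
  (forall v, (0 <= h v)%E) -> (forall v, (0 <= a v)%E) ->
  (forall t t', agree_out s t t' -> a t = a t') ->
  forall t, iint s (fun v => a v * h v)%E t = (a t * iint s h t)%E.
Proof.
move=> mh h0 a0; elim: s => [|j s IH] Ha t //=.
transitivity (\int[mu]_(y in setT) (a t * iint s h (setc t j y)))%E.
  apply: eq_integral => y _; rewrite IH.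
    congr (_ * _)%E; apply: Ha => i; rewrite inE negb_or tnth_setc => /andP[/negbTE -> _] //.
  by move=> u u' H; apply: Ha => i; rewrite inE negb_or => /andP[_ /H].
rewrite ge0_integralZl //; first exact: measurable_iint_setc.
by move=> y _; exact: iint_ge0.
Qed.

Lemma iintD s h1 h2 : measurable_fun [set: T] h1 -> (forall v, (0 <= h1 v)%E) ->
  measurable_fun [set: T] h2 -> (forall v, (0 <= h2 v)%E) ->
  forall t, iint s (fun v => h1 v + h2 v)%E t = (iint s h1 t + iint s h2 t)%E.
Proof.
move=> m1 p1 m2 p2; elim: s => [|j s IH] t //=.
transitivity (\int[mu]_(y in setT) (iint s h1 (setc t j y) + iint s h2 (setc t j y)))%E.
  by apply: eq_integral => y _; rewrite IH.
rewrite ge0_integralD //; try exact: measurable_iint_setc.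
- by move=> y _; exact: iint_ge0.
- by move=> y _; exact: iint_ge0.
Qed.

Lemma iint_le s h1 h2 : measurable_fun [set: T] h1 -> (forall v, (0 <= h1 v)%E) ->
  measurable_fun [set: T] h2 -> (forall v, (h1 v <= h2 v)%E) ->
  forall t, (iint s h1 t <= iint s h2 t)%E.
Proof.
move=> m1 p1 m2 le12.
have p2 : forall v, (0 <= h2 v)%E by move=> v; exact: le_trans (p1 v) (le12 v).
elim: s => [|j s IH] t //=.
apply: ge0_le_integral => //; (try by move=> y _; exact: iint_ge0);
  (try by move=> y _; exact: IH); exact: measurable_iint_setc.
Qed.

Lemma iint_zero s h1 h2 : measurable_fun [set: T] h1 -> (forall v, (0 <= h1 v)%E) ->
  measurable_fun [set: T] h2 -> (forall v, (0 <= h2 v)%E) ->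
  (forall v, h1 v = 0%E -> h2 v = 0%E) ->
  forall t, iint s h1 t = 0%E -> iint s h2 t = 0%E.
Proof.
move=> m1 p1 m2 p2 H12; elim: s => [|j s IH] t /=; first exact: H12.
move=> I0.
have mF1 := measurable_iint_setc s h1 t j m1 p1.
have mF2 := measurable_iint_setc s h2 t j m2 p2.
have : ae_eq mu setT (fun y => iint s h1 (setc t j y)) (cst 0%E).
  apply/(ae_eq_integral_abs mu measurableT mF1).
  rewrite -I0; apply: eq_integral => y _; rewrite gee0_abs //; exact: iint_ge0.
move=> ae1.
rewrite (ae_eq_integral (cst 0%E)) //; first by rewrite integral0.
apply: filterS ae1 => y /= H1 Dy; apply: IH; exact: H1.
Qed.


Definition ind (A : set T) : T -> \bar R := fun t => (\1_A t)%:E.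

Lemma measurable_ind A : measurable A -> measurable_fun [set: T] (ind A).
Proof. by move=> mA; apply/measurable_EFinP; exact: measurable_indic. Qed.

Lemma ind_ge0 A t : (0 <= ind A t)%E.
Proof. by rewrite lee_fin. Qed.

Lemma ind_in A t : A t -> ind A t = 1%E.
Proof. by move=> At; rewrite /ind indicE mem_set. Qed.

Lemma ind_out A t : ~ A t -> ind A t = 0%E.
Proof. by move=> At; rewrite /ind indicE memNset. Qed.

Lemma ind_U_le A B v : (ind (A `|` B) v <= ind A v + ind B v)%E.
Proof.
have [v1|v1] := pselect (A v); have [v2|v2] := pselect (B v).
- by rewrite (@ind_in (A `|` B) v (or_introl v1)) (@ind_in A v v1) (@ind_in B v v2) -EFinD lee_fin; lra.
- by rewrite (@ind_in (A `|` B) v (or_introl v1)) (@ind_in A v v1) (@ind_out B v v2) -EFinD lee_fin; lra.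
- by rewrite (@ind_in (A `|` B) v (or_intror v2)) (@ind_out A v v1) (@ind_in B v v2) -EFinD lee_fin; lra.
- have nU : ~ (A `|` B) v by case.
  by rewrite (@ind_out _ v nU) (@ind_out A v v1) (@ind_out B v v2) adde0.
Qed.

Lemma ae_leb_and (P Q : T -> Prop) : ae_leb P -> ae_leb Q -> ae_leb (fun t => P t /\ Q t).
Proof.
case=> N1 [m1 [z1 s1]] [N2 [m2 [z2 s2]]]; exists (N1 `|` N2).
have mU : measurable (N1 `|` N2) by exact: measurableU.
split => //.
split.
  apply/eqP; rewrite eq_le; apply/andP; split; last by apply: iint_ge0 => v; rewrite lee_fin.
  have e := iintD (enum 'I_p) _ _ (measurable_ind _ m1) (@ind_ge0 N1) (measurable_ind _ m2)
    (@ind_ge0 N2) (zerov R p).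
  have le := iint_le (enum 'I_p) _ _ (measurable_ind _ mU) (@ind_ge0 _)
    (emeasurable_funD (measurable_ind _ m1) (measurable_ind _ m2)) (@ind_U_le N1 N2) (zerov R p).
  move: le; rewrite e.
  rewrite /leb_int in z1 z2.
  by rewrite -/(ind N1) -/(ind N2) in z1 z2; rewrite z1 z2 adde0.
move=> t /= H.
have [Pt|Pt] := pselect (P t); last by left; apply: s1.
have [Qt|Qt] := pselect (Q t); last by right; apply: s2.
by case: H.
Qed.

Lemma ae_leb_mono (P Q : T -> Prop) : ae_leb P -> (forall t, P t -> Q t) -> ae_leb Q.
Proof.
case=> N [mN [zN sN]] PQ; exists N; split => //; split => //.
move=> t /= nQ; apply: sN => /= Pt; exact: nQ (PQ _ Pt).
Qed.

Lemma ae_leb_zero h : measurable_fun [set: T] h -> (forall v, (0 <= h v)%E) ->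
  leb_int h = 0%E -> ae_leb (fun t => h t = 0%E).
Proof.
move=> mh h0 z; exists [set t | (0 < h t)%E].
have mN : measurable [set t | (0 < h t)%E].
  have := measurable_lte measurableT (measurable_cst 0%E) mh.
  by rewrite setTI.
split => //.
split.
  apply: (iint_zero (enum 'I_p) h (ind _) mh h0 (measurable_ind _ mN) (@ind_ge0 _) _ (zerov R p) z).
  by move=> v hv; apply: ind_out; rewrite /= hv ltxx.
move=> t /= ht; rewrite lt_def h0 andbT; exact/eqP.
Qed.

Lemma iint_inf s h t : measurable_fun [set: T] h -> (forall v, (0 <= h v)%E) ->
  (iint s h t < +oo)%E -> iint s (ind [set v | h v = +oo%E]) t = 0%E.
Proof.
move=> mh h0 fin.
set E := [set v | h v = +oo%E].
have mE : measurable E.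
  have := measurable_eqe measurableT mh (measurable_cst +oo%E).
  by rewrite setTI.
have e1 := iintZ_out s (ind E) (cst +oo%E) (measurable_ind _ mE) (@ind_ge0 E) (fun _ => leey _)
  (fun _ _ _ => erefl) t.
have le1 : (iint s (fun v => cst +oo v * ind E v) t <= iint s h t)%E.
  apply: iint_le => //.
  - by apply: emeasurable_funM => //; exact: measurable_ind.
  - by move=> v; apply: mule_ge0; [exact: leey| exact: ind_ge0].
  - move=> v; have [Ev|Ev] := pselect (E v).
      by rewrite ind_in //= mule1 Ev.
    by rewrite ind_out //= mule0.
rewrite e1 /= in le1.
have X0 := iint_ge0 s _ (@ind_ge0 E) t.
move: X0; rewrite le_eqVlt => /orP[/eqP <- //|X0].
by move: (le_lt_trans le1 fin); rewrite gt0_mulye // ltxx.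
Qed.


Lemma lift_null (S : {set 'I_p}) a : measurable_fun [set: T] a -> (forall v, (0 <= a v)%E) ->
  (forall t t', agree_out (enum S) t t' -> a t = a t') ->
  iint (enum (~: S)%SET) a (zerov R p) = 0%E -> leb_int a = 0%E.
Proof.
move=> ma a0 Ha z.
rewrite (leb_int_split S) //.
have e : iint (enum S) a = fun v => (a v * iint (enum S) (cst 1%E) v)%E.
  apply/funext => v.
  have := iintZ_out (enum S) (cst 1%E) a (measurable_cst _) (fun _ => lee01) a0 Ha v.
  by rewrite (_ : (fun v => a v * cst 1%E v)%E = a) //; apply/funext => w; rewrite /= mule1.
rewrite e.
apply: (iint_zero _ a _ ma a0 _ _ _ _ z).
- apply: emeasurable_funM => //; apply: measurable_iint => //; exact: lee01.
- by move=> v; apply: mule_ge0 => //; apply: iint_ge0 => ?; exact: lee01.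
- by move=> v av; rewrite /= av mul0e.
Qed.

Lemma ae_half u v : measurable_fun [set: T] u -> (forall t, (0 <= u t)%E) ->
  measurable_fun [set: T] v -> (forall t, (0 <= v t)%E) ->
  (forall t, (v t < u t)%E -> v t \is a fin_num) ->
  leb_int (fun t => u t * ind [set t | (v t < u t)%E] t)%E =
    leb_int (fun t => v t * ind [set t | (v t < u t)%E] t)%E ->
  (leb_int (fun t => v t * ind [set t | (v t < u t)%E] t)%E < +oo)%E ->
  leb_int (ind [set t | (v t < u t)%E]) = 0%E.
Proof.
move=> mu u0 mv v0 vfin.
set A := [set t | (v t < u t)%E].
have mA : measurable A by have := measurable_lte measurableT mv mu; rewrite setTI.
set w := fun t => ((u t - v t) * ind A t)%E.
have mw : measurable_fun [set: T] w.
  by apply: emeasurable_funM; [exact: emeasurable_funB|exact: measurable_ind].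
have w0 : forall t, (0 <= w t)%E.
  move=> t; rewrite /w; have [At|At] := pselect (A t).
    by rewrite ind_in // mule1 suber_ge0 ?vfin //; exact: ltW.
  by rewrite ind_out // mule0.
have mvA : measurable_fun [set: T] (fun t => v t * ind A t)%E.
  by apply: emeasurable_funM => //; exact: measurable_ind.
have vA0 : forall t, (0 <= v t * ind A t)%E.
  by move=> t; apply: mule_ge0 => //; exact: ind_ge0.
have split : (fun t => u t * ind A t)%E = (fun t => v t * ind A t + w t)%E.
  apply/funext => t; rewrite /w; have [At|At] := pselect (A t).
    by rewrite ind_in // !mule1 addeC subeK // vfin.
  by rewrite ind_out // !mule0 adde0.
move=> eq fin.
have eq2 : (leb_int (fun t => v t * ind A t) + leb_int w = leb_int (fun t => v t * ind A t))%E.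
  transitivity (leb_int (fun t => u t * ind A t))%E; last exact: eq.
  by rewrite split /leb_int iintD.
have W0 : leb_int w = 0%E.
  have Lf : leb_int (fun t => v t * ind A t)%E \is a fin_num.
    by rewrite ge0_fin_numE //; apply: iint_ge0.
  by rewrite -(addeK (leb_int w) Lf) [leb_int w + _]addeC eq2 subee.
apply: (iint_zero _ w _ mw w0 (measurable_ind _ mA) (@ind_ge0 _) _ _ W0).
move=> t wt; apply: ind_out => At; move: wt; rewrite /w ind_in // mule1 => wt.
by move: At; rewrite /A /= -sube_gt0 wt ltxx.
Qed.


Lemma ae_leb_null (E : set T) : measurable E -> leb_int (ind E) = 0%E ->
  ae_leb (fun t => ~ E t).
Proof.
move=> mE z; exists E; split => //; split => //.
by move=> t /= /contrapT.
Qed.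

Lemma ind_le1 h A t : (0 <= h t)%E -> (h t * ind A t <= h t)%E.
Proof.
move=> h0; have [At|At] := pselect (A t).
  by rewrite ind_in // mule1.
by rewrite ind_out // mule0.
Qed.

Lemma ae_unique u (f : T -> R) : measurable_fun [set: T] u -> (forall t, (0 <= u t)%E) ->
  measurable_fun [set: T] f -> (forall t, 0 <= f t) ->
  (forall A, measurable A ->
     leb_int (fun t => u t * ind A t)%E = leb_int (fun t => (f t)%:E * ind A t)%E) ->
  (leb_int (fun t => (f t)%:E) < +oo)%E ->
  ae_leb (fun t => u t = (f t)%:E).
Proof.
move=> mU u0 mf f0 H fin.
set v := fun t => (f t)%:E.
have mv : measurable_fun [set: T] v by exact/measurable_EFinP.
have v0 : forall t, (0 <= v t)%E by move=> t; rewrite lee_fin.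
have vfin : forall t, v t \is a fin_num by [].
have finA : forall A, measurable A -> (leb_int (fun t => v t * ind A t)%E < +oo)%E.
  move=> A mA; apply: le_lt_trans fin; apply: iint_le => //.
  - by apply: emeasurable_funM => //; exact: measurable_ind.
  - by move=> t; apply: mule_ge0 => //; exact: ind_ge0.
  - by move=> t; exact: ind_le1.
have mA : measurable [set t | (v t < u t)%E].
  by have := measurable_lte measurableT mv mU; rewrite setTI.
have mB : measurable [set t | (u t < v t)%E].
  by have := measurable_lte measurableT mU mv; rewrite setTI.
have h1 := ae_half u v mU u0 mv v0 (fun t _ => vfin t) (H _ mA) (finA _ mA).
have h2 : leb_int (ind [set t | (u t < v t)%E]) = 0%E.
  apply: (ae_half v u mv v0 mU u0).
  - move=> t ut; rewrite ge0_fin_numE //; exact: lt_trans ut (ltey _).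
  - by symmetry; apply: H.
  - rewrite (_ : leb_int (fun t => u t * ind [set t | (u t < v t)%E] t) =
       leb_int (fun t => v t * ind [set t | (u t < v t)%E] t))%E; first exact: finA.
    exact: H.
apply: (ae_leb_mono _ _ (ae_leb_and _ _ (ae_leb_null _ mA h1) (ae_leb_null _ mB h2))) => t [/negP + /negP]; rewrite -!leNgt => le1 le2.
by apply/eqP; rewrite eq_le le1 le2.
Qed.

Lemma iint0 s t : iint s (fun _ => 0%E) t = 0%E.
Proof.
elim: s t => [|j s IH] t //=.
by rewrite (eq_integral (fun _ => 0%E)) ?integral0 // => y _; exact: IH.
Qed.

Lemma agree_iint s h t t' : agree_out s t t' -> iint s h t = iint s h t'.
Proof. exact: iint_agree. Qed.

Lemma ae_fin (S : {set 'I_p}) H : measurable_fun [set: T] H -> (forall v, (0 <= H v)%E) ->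
  (forall t t', agree_out (enum S) t t' -> H t = H t') ->
  (iint (enum (~: S)%SET) H (zerov R p) < +oo)%E ->
  ae_leb (fun t => H t != +oo%E).
Proof.
move=> mH H0 Ha fin.
set E := [set v | H v = +oo%E].
have mE : measurable E.
  by have := measurable_eqe measurableT mH (measurable_cst +oo%E); rewrite setTI.
have z := iint_inf _ _ _ mH H0 fin.
have z2 : leb_int (ind E) = 0%E.
  apply: (lift_null S) z.
  - exact: measurable_ind.
  - exact: ind_ge0.
  - move=> t t' tt'; have e := Ha _ _ tt'.
    have [Et|Et] := pselect (E t).
      by rewrite !ind_in // /E /= -e.
    by rewrite !ind_out // /E /= -e.
by apply: (ae_leb_mono _ _ (ae_leb_null _ mE z2)) => t Et; apply/eqP.
Qed.

Lemma ae_iint (S : seq 'I_p) h1 h2 : measurable_fun [set: T] h1 -> (forall v, (0 <= h1 v)%E) ->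
  measurable_fun [set: T] h2 -> (forall v, (0 <= h2 v)%E) ->
  ae_leb (fun t => h1 t = h2 t) ->
  forall (Ss : {set 'I_p}), S = enum Ss ->
  ae_leb (fun t => iint S h1 t = iint S h2 t).
Proof.
move=> m1 p1 m2 p2 [N [mN [zN sN]]] Ss ->.
have Z (h : T -> \bar R) : measurable_fun [set: T] h -> (forall v, (0 <= h v)%E) ->
    ae_leb (fun t => iint (enum Ss) (fun v => h v * ind N v)%E t = 0%E).
  move=> mh h0.
  have mhN : measurable_fun [set: T] (fun v => h v * ind N v)%E.
    by apply: emeasurable_funM => //; exact: measurable_ind.
  have hN0 : forall v, (0 <= h v * ind N v)%E.
    by move=> v; apply: mule_ge0 => //; exact: ind_ge0.
  have l0 : leb_int (fun v => h v * ind N v)%E = 0%E.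
    apply: (iint_zero _ (ind N) _ (measurable_ind _ mN) (@ind_ge0 _) mhN hN0 _ _ zN).
    by move=> v ->; rewrite mule0.
  apply: ae_leb_zero.
  - exact: measurable_iint.
  - exact: iint_ge0.
  apply: (lift_null Ss).
  - exact: measurable_iint.
  - exact: iint_ge0.
  - by move=> t t'; exact: iint_agree.
  by rewrite -(leb_int_split Ss).
apply: (ae_leb_mono _ _ (ae_leb_and _ _ (Z h1 m1 p1) (Z h2 m2 p2))) => t [z1 z2].
have dec (h : T -> \bar R) : measurable_fun [set: T] h -> (forall v, (0 <= h v)%E) ->
    iint (enum Ss) h t = (iint (enum Ss) (fun v => h v * ind (~` N) v) t +
                          iint (enum Ss) (fun v => h v * ind N v) t)%E.
  move=> mh h0; rewrite -iintD.
  - congr iint; apply/funext => v; have [Nv|Nv] := pselect (N v).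
      by rewrite (ind_in _ _ Nv) (@ind_out (~` N) v) ?mule1 ?mule0 ?add0e.
    by rewrite (ind_out _ _ Nv) (@ind_in (~` N) v) ?mule1 ?mule0 ?adde0.
  - by apply: emeasurable_funM => //; apply: measurable_ind; exact: measurableC.
  - by move=> v; apply: mule_ge0 => //; exact: ind_ge0.
  - by apply: emeasurable_funM => //; exact: measurable_ind.
  - by move=> v; apply: mule_ge0 => //; exact: ind_ge0.
rewrite (dec h1 m1 p1) (dec h2 m2 p2) z1 z2; congr (_ + _)%E.
congr iint; apply/funext => v; have [Nv|Nv] := pselect (N v).
  by rewrite !(@ind_out (~` N) v) ?mule0.
rewrite !(@ind_in (~` N) v) //; congr (_ * _)%E.
by apply: contrapT => ne; apply: Nv; apply: sN.
Qed.

End Iint.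

Lemma measurable_inv (R : realType) : measurable_fun [set: R] (@GRing.inv R).
Proof.
have -> : [set: R] = [set x | x = 0] `|` [set x | x != 0].
  apply/seteqP; split => x //= _; case: (eqVneq x 0) => [->|]; [left|right] => //.
have m0 : measurable [set x : R | x = 0] by exact: measurable_set1.
have m1 : measurable [set x : R | x != 0].
  by apply: open_measurable; exact: open_neq.
apply/(measurable_funU _ m0 m1); split.
- move=> _ B mB; have [B0|B0] := pselect (B 0^-1).
    rewrite (_ : _ `&` _ = [set x | x = 0]) //.
    by apply/seteqP; split => x /=; [case|move=> ->].
  rewrite (_ : _ `&` _ = set0) //.
  by apply/seteqP; split => x //= [-> ].
- apply: open_continuous_measurable_fun; first exact: open_neq.
  by move=> x; rewrite inE /= => x0; exact: inv_continuous.
Qed.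

Theorem theorem1 (R : realType) (p K : nat) (hK : (0 < K)%N)
  (obs : 'I_K -> {set 'I_p})
  (hobs1 : obs (Ordinal hK) = [set: 'I_p]%SET)
  (hobs_ne : (\bigcap_(j < K) obs j)%SET != finset.set0)
  (g : 'I_K -> p.-tuple R -> R)
  (hg : forall j, is_density (g j))
  (hmass : (\sum_(j < K) leb_int (fun t => (g j t)%:E) = 1)%E)
  (hpi1 : (0 < leb_int (fun t => (g (Ordinal hK) t)%:E))%E)
  (hMAR : forall j : 'I_K,
     ae_leb (fun t =>
       (0 < marg (~: \bigcap_(i < K) obs i)%SET (g j) t)%E ->
       cond_dens (~: \bigcap_(i < K) obs i)%SET (g j) t =
       cond_dens (~: \bigcap_(i < K) obs i)%SET (fun v => \sum_(i < K) g i v) t))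
  (k : 'I_K) (hk : k != Ordinal hK)
  (Ghat : p.-tuple R -> p.-tuple R) (hG : measurable_fun setT Ghat)
  (ptheta : p.-tuple R -> R) (hpt : is_density ptheta)
  (hpt_cond : forall (t : p.-tuple R) (A : set (p.-tuple R)), measurable A ->
     leb_int (fun z => (std_gauss z * \1_A (gen_out Ghat (obs k) t z))%:E) =
     iint (enum (~: obs k)%SET) (fun v => (ptheta v * \1_A v)%:E) t)
  (hPk : forall A : set (p.-tuple R), measurable A ->
     let phi1 := fun x => g (Ordinal hK) x /
                   fine (leb_int (fun t => (g (Ordinal hK) t)%:E)) in
     leb_int (fun x => ((phi1 x)%:E *
        leb_int (fun z => (std_gauss z * \1_A (gen_out Ghat (obs k) x z))%:E))%E)
     = leb_int (fun x => (phi1 x * \1_A x)%:E)) :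
  let phi1 := fun x => g (Ordinal hK) x /
                fine (leb_int (fun t => (g (Ordinal hK) t)%:E)) in
  ae_leb (fun t =>
    (0 < marg (~: obs k)%SET phi1 t)%E ->
    ptheta t = cond_dens (~: obs k)%SET (fun v => \sum_(i < K) g i v) t).


Proof.
move=> phi1.
set k1 := Ordinal hK.
set f := fun v => \sum_(i < K) g i v.
set S := (~: obs k)%SET.
set S0 := (~: \bigcap_(j < K) obs j)%SET.
have g0 : forall j t, 0 <= g j t by move=> j; exact: (hg j).2.
have mg : forall j, measurable_fun [set: p.-tuple R] (g j) by move=> j; exact: (hg j).1.
have mgE : forall j, measurable_fun [set: p.-tuple R] (fun t => (g j t)%:E).
  by move=> j; apply/measurable_EFinP; exact: mg.
have gE0 : forall j t, (0 <= (g j t)%:E)%E by move=> j t; rewrite lee_fin.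
have f0 : forall t, 0 <= f t by move=> t; apply: sumr_ge0 => i _.
have mf : measurable_fun [set: p.-tuple R] f by apply: measurable_sum.
have mfE : measurable_fun [set: p.-tuple R] (fun t => (f t)%:E) by exact/measurable_EFinP.
have fE0 : forall t, (0 <= (f t)%:E)%E by move=> t; rewrite lee_fin.
set LG1 := leb_int (fun t => (g k1 t)%:E).
have LG10 : (0 <= LG1)%E by apply: iint_ge0.
have LG1le : (LG1 <= 1)%E.
  rewrite -hmass (bigD1 k1) //=; apply: leeDl; apply: sume_ge0 => j _.
  exact: iint_ge0.
have LG1fin : LG1 \is a fin_num.
  by rewrite ge0_fin_numE //; apply: le_lt_trans LG1le (ltey _).
set c := fine LG1.
have LG1E : LG1 = c%:E by rewrite fineK.
have hc : 0 < c by rewrite -lte_fin -LG1E.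
have phiE : forall x, phi1 x = g k1 x / c by [].
have mphi : measurable_fun [set: p.-tuple R] phi1.
  rewrite /phi1; apply: measurable_funM => //; exact: measurable_cst.
have phi0 : forall x, 0 <= phi1 x.
  by move=> x; rewrite phiE divr_ge0 // ltW.
have mphiE : measurable_fun [set: p.-tuple R] (fun t => (phi1 t)%:E) by exact/measurable_EFinP.
have phiE0 : forall t, (0 <= (phi1 t)%:E)%E by move=> t; rewrite lee_fin.
set M' := iint (enum S) (fun v => (phi1 v)%:E).
set M1 := iint (enum S) (fun v => (g k1 v)%:E).
have hM' : forall t, M' t = ((c^-1)%:E * M1 t)%E.
  move=> t; rewrite -(iintZ_out (enum S) (fun v => (g k1 v)%:E) (cst (c^-1)%:E)) //.
  - apply: (congr1 (fun h => iint _ h t)); apply/funext => v.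
    by rewrite /= phiE -EFinM mulrC.
  - by move=> ?; rewrite lee_fin invr_ge0 ltW.
have mpt : measurable_fun [set: p.-tuple R] ptheta by exact: hpt.1.
have pt0 : forall v, 0 <= ptheta v by exact: hpt.2.
have mptE : measurable_fun [set: p.-tuple R] (fun v => (ptheta v)%:E) by exact/measurable_EFinP.
have Jm : forall A, measurable A ->
    measurable_fun [set: p.-tuple R] (fun v => (ptheta v * \1_A v)%:E).
  move=> A mA; apply/measurable_EFinP; apply: measurable_funM.
  exact: mpt. exact: measurable_indic.
have J0 : forall A v, (0 <= (ptheta v * \1_A v)%:E)%E.
  by move=> A v; rewrite lee_fin; apply: mulr_ge0 => //; rewrite indicE.
have mM' : measurable_fun [set: p.-tuple R] M' by exact: measurable_iint.
have M'0 : forall t, (0 <= M' t)%E by exact: iint_ge0.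
have Step1 : forall A, measurable A ->
    leb_int (fun t => M' t * (ptheta t)%:E * ind A t)%E =
    leb_int (fun t => (phi1 t)%:E * ind A t)%E.
  move=> A mA.
  set J := iint (enum S) (fun v => (ptheta v * \1_A v)%:E).
  have mJ : measurable_fun [set: p.-tuple R] J by apply: measurable_iint; [exact: Jm|exact: J0].
  have J0' : forall t, (0 <= J t)%E by apply: iint_ge0; exact: J0.
  have e1 : leb_int (fun x => (phi1 x)%:E * J x)%E = leb_int (fun x => (phi1 x)%:E * ind A x)%E.
    have -> : (fun x => (phi1 x)%:E * ind A x)%E = (fun x => (phi1 x * \1_A x)%:E).
      by apply/funext => x; rewrite /ind EFinM.
    transitivity (leb_int (fun x => (phi1 x)%:E *
        leb_int (fun z => (std_gauss z * \1_A (gen_out Ghat (obs k) x z))%:E))%E); last first.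
      exact: (hPk A mA).
    apply: (congr1 (@leb_int R p)); apply/funext => x; by rewrite hpt_cond.
  rewrite -e1.
  rewrite (leb_int_split S); last first.
  - move=> t; apply: mule_ge0; [apply: mule_ge0 => //; rewrite lee_fin //|exact: ind_ge0].
  - apply: emeasurable_funM; [exact: emeasurable_funM|exact: measurable_ind].
  rewrite [RHS](leb_int_split S); last first.
  - by move=> t; apply: mule_ge0.
  - exact: emeasurable_funM.
  apply: (congr1 (fun h => iint _ h _)); apply/funext => t.
  rewrite (_ : (fun v => M' v * (ptheta v)%:E * ind A v)%E =
               (fun v => M' v * (ptheta v * \1_A v)%:E)%E); last first.
    by apply/funext => v; rewrite -muleA /ind -EFinM.
  rewrite (_ : (fun v => (phi1 v)%:E * J v)%E = (fun v => J v * (phi1 v)%:E)%E); last first.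
    by apply/funext => v; rewrite muleC.
  rewrite iintZ_out //; last by move=> u u' H; exact: iint_agree.
  rewrite iintZ_out //; last by move=> u u' H; exact: iint_agree.
  by rewrite muleC.
  exact: Jm.
have mM1 : measurable_fun [set: p.-tuple R] M1 by exact: measurable_iint.
have M10 : forall t, (0 <= M1 t)%E by exact: iint_ge0.
have F1 : ae_leb (fun t => M' t * (ptheta t)%:E = (phi1 t)%:E)%E.
  apply: ae_unique => //.
  - exact: emeasurable_funM.
  - by move=> t; apply: mule_ge0 => //; rewrite lee_fin.
  have -> : leb_int (fun t => (phi1 t)%:E) = ((c^-1)%:E * LG1)%E.
    rewrite /leb_int -(iintZ_out _ (fun v => (g k1 v)%:E) (cst (c^-1)%:E)) //.
    - apply: (congr1 (fun h => iint _ h _)); apply/funext => v.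
      by rewrite /= phiE -EFinM mulrC.
    - by move=> ?; rewrite lee_fin invr_ge0 ltW.
  by rewrite LG1E -EFinM ltey.
have F2 : ae_leb (fun t => M1 t != +oo%E).
  apply: (ae_fin S) => //.
  - by move=> u u' H; exact: iint_agree.
  by rewrite -(leb_int_split S) // -/LG1 LG1E ltey.
have agS : forall t t' : p.-tuple R, agree_out (enum S) t t' -> agree_out (enum S0) t t'.
  move=> t t' H i /=; rewrite mem_enum /S0 inE negbK => /bigcapP/(_ k isT) ik.
  by apply: H; rewrite /= mem_enum /S inE negbK.
set m1 := iint (enum S0) (fun v => (g k1 v)%:E).
set mF := iint (enum S0) (fun v => (f v)%:E).
set Mf := iint (enum S) (fun v => (f v)%:E).
have mm1 : measurable_fun [set: p.-tuple R] m1 by exact: measurable_iint.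
have mmF : measurable_fun [set: p.-tuple R] mF by exact: measurable_iint.
have m10 : forall t, (0 <= m1 t)%E by exact: iint_ge0.
have mF0 : forall t, (0 <= mF t)%E by exact: iint_ge0.
have Fm1 : ae_leb (fun t => m1 t != +oo%E).
  apply: (ae_fin S0) => //.
  - by move=> u u' H; exact: iint_agree.
  by rewrite -(leb_int_split S0) // -/LG1 LG1E ltey.
set Z := [set t | m1 t = 0%E].
have mZ : measurable Z.
  by have := measurable_eqe measurableT mm1 (measurable_cst 0%E); rewrite setTI.
have Fz : ae_leb (fun t => (g k1 t)%:E * ind Z t = 0)%E.
  apply: ae_leb_zero.
  - by apply: emeasurable_funM => //; exact: measurable_ind.
  - by move=> t; apply: mule_ge0 => //; exact: ind_ge0.
  rewrite (leb_int_split S0); last first.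
  - by move=> t; apply: mule_ge0 => //; exact: ind_ge0.
  - by apply: emeasurable_funM => //; exact: measurable_ind.
  rewrite (_ : iint (enum S0) _ = fun _ => 0%E); first exact: iint0.
  apply/funext => t.
  rewrite (_ : (fun v => (g k1 v)%:E * ind Z v)%E = (fun v => ind Z v * (g k1 v)%:E)%E); last first.
    by apply/funext => v; rewrite muleC.
  have HaZ : forall u u', agree_out (enum S0) u u' -> ind Z u = ind Z u'.
    move=> u u' H; have e : m1 u = m1 u' by exact: iint_agree.
    have [Zu|Zu] := pselect (Z u).
      by rewrite !ind_in // /Z /= -e.
    by rewrite !ind_out // /Z /= -e.
  rewrite (iintZ_out _ _ _ (mgE k1) (gE0 k1) (@ind_ge0 _ _ Z) HaZ).
  have [Zt|Zt] := pselect (Z t).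
    by rewrite ind_in // -/m1 Zt mule0.
  by rewrite ind_out // mul0e.
set a := fun t => fine (m1 t) / fine (mF t).
have E1 : ae_leb (fun t => g k1 t = a t * f t).
  apply: (ae_leb_mono _ _ (ae_leb_and _ _ (ae_leb_and _ _ Fm1 Fz) (hMAR k1))).
  move=> t [[m1fin zt] H3].
  have [m1z|m1nz] := eqVneq (m1 t) 0%E.
    have Zt : Z t by [].
    move: zt; rewrite ind_in // mule1 => -[->].
    by rewrite /a m1z /= !mul0r.
  have m1pos : (0 < m1 t)%E by rewrite lt_def m1nz m10.
  have m1f : m1 t \is a fin_num by rewrite ge0_fin_numE // lt_neqAle m1fin leey.
  have m1r : 0 < fine (m1 t) by rewrite -lte_fin fineK.
  have := H3 m1pos; rewrite /cond_dens /marg -/m1 -/mF => eq.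
  rewrite -(divfK (lt0r_neq0 m1r) (g k1 t)) eq /a.
  rewrite /f; ring.
have ma : measurable_fun [set: p.-tuple R] a.
  apply: (measurable_funM (f := fun t => fine (m1 t)) (g := fun t => (fine (mF t))^-1)).
    exact: measurableT_comp (fine_measurable measurableT) mm1.
  apply: measurableT_comp; first exact: measurable_inv.
  exact: measurableT_comp (fine_measurable measurableT) mmF.
have a0 : forall t, 0 <= a t.
  by move=> t; apply: divr_ge0; apply: fine_ge0.
have Ha : forall u u', agree_out (enum S) u u' -> (a u)%:E = (a u')%:E.
  move=> u u' H.
  have e1 : m1 u = m1 u' by apply: iint_agree; exact: agS.
  have e2 : mF u = mF u' by apply: iint_agree; exact: agS.
  by rewrite /a e1 e2.
have E2 : ae_leb (fun t => M1 t = ((a t)%:E * Mf t)%E).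
  have mh2 : measurable_fun [set: p.-tuple R] (fun v => (a v * f v)%:E).
    by apply/measurable_EFinP; exact: measurable_funM.
  have h20 : forall v, (0 <= (a v * f v)%:E)%E.
    by move=> v; rewrite lee_fin mulr_ge0.
  have E1' : ae_leb (fun t => (g k1 t)%:E = (a t * f t)%:E).
    by apply: (ae_leb_mono _ _ E1) => t ->.
  have H := ae_iint (enum S) _ _ (mgE k1) (gE0 k1) mh2 h20 E1' S erefl.
  apply: (ae_leb_mono _ _ H) => t e; rewrite /M1 e.
  rewrite (_ : (fun v => (a v * f v)%:E) = (fun v => (a v)%:E * (f v)%:E)%E); last first.
    by apply/funext => v; rewrite EFinM.
  rewrite (iintZ_out _ _ (fun v => (a v)%:E) mfE fE0 _ Ha t) //.
have Mf0 : forall t, (0 <= Mf t)%E by exact: iint_ge0.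
apply: (ae_leb_mono _ _ (ae_leb_and _ _ (ae_leb_and _ _ F1 F2) (ae_leb_and _ _ E1 E2))).
move=> t [[h1 h2] [h3 h4]] hyp.
rewrite /cond_dens /marg -/Mf.
rewrite /marg -/M' hM' in hyp.
rewrite hM' in h1.
have M1f : M1 t \is a fin_num by rewrite ge0_fin_numE // lt_neqAle h2 leey.
set m := fine (M1 t).
have M1E : M1 t = m%:E by rewrite fineK.
rewrite M1E -EFinM lte_fin in hyp.
have hm : 0 < m.
  have ci : 0 < c^-1 by rewrite invr_gt0.
  by rewrite -(pmulr_rgt0 m ci).
move: h4; rewrite M1E.
case E: (Mf t) => [r| |] h4; last first.
- by have := Mf0 t; rewrite E.
- exfalso; have [a0'|apos] := eqVneq (a t) 0.
    by move: h4; rewrite a0' mul0e => -[] /eqP; rewrite (gt_eqF hm).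
  have apos' : 0 < a t by rewrite lt_def apos a0.
  by move: h4; rewrite muleC gt0_mulye // lte_fin.
move: h4 => -[] mr.
rewrite /= .
move: h1; rewrite M1E -!EFinM => -[] h1.
have r0 : r != 0 by apply: contraTneq hm => r0; rewrite mr r0 mulr0 ltxx.
have an0 : a t != 0 by apply: contraTneq hm => a0'; rewrite mr a0' mul0r ltxx.
have cn0 : c != 0 by exact: lt0r_neq0.
have mn0 : m != 0 by exact: lt0r_neq0.
have e : ptheta t = phi1 t / (c^-1 * m).
  by rewrite -h1 [_ * ptheta t]mulrC mulfK // mulf_neq0 // invr_neq0.
rewrite e phiE h3 mr.
field.
by rewrite r0 cn0 an0.
Qed.
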